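(* Let $P$ be any product rule. Let $(f_a)_{a\in\Sigma}$ be a tuple of $P$-finite series and let $g$ be a series with $\delta_ag=f_a$ for all $a\in\Sigma$. Then $g$ is $P$-finite.
   Context: Let $\Sigma$ be a finite alphabet, $\Sigma^*$ the finite words with empty word $\varepsilon$. A series is $f:\Sigma^*\to\mathbb Q$, $f_w=f(w)$; series form a $\mathbb Q$-vector space under pointwise operations with zero $\mathbb 0$. For $a\in\Sigma$, $\delta_af$ is $w\mapsto f(aw)$. Terms over $X$: generated by $u,v::=x\mid 0\mid c\cdot u\mid u+v\mid u*v$. A product rule is a term $P$ over $\{x,\dot x,y,\dot y\}$. The $P$-product $*$ and semantics $[\![u]\!]_\varrho$ are the unique pair with $(f*g)_\varepsilon=f_\varepsilon g_\varepsilon$, $\delta_a(f*g)=[\![P]\!]_{[x\mapsto f,\dot x\mapsto\delta_af,y\mapsto g,\dot y\mapsto\delta_ag]}$, and $[\![\cdot]\!]_\varrho$ interpreting variables via $\varrho$, constructors by zero, scalar multiplication, addition, $*$. $P$-finite: $A(g_1,\dots,g_k)$ is the smallest set of series containing $\mathbb 0,g_1,\dots,g_k$ closed under scalar multiplication, $+$, $*$; $f$ is $P$-finite if there are $g_1=f,\dots,g_k$ with $\delta_ag_i\in A(g_1,\dots,g_k)$ for all $i$ and $a\in\Sigma$. *)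

(* Defs.v *)
From mathcomp Require Import all_boot all_algebra.
Set Implicit Arguments. Unset Strict Implicit. Unset Printing Implicit Defensive.
Import GRing.Theory.
Local Open Scope ring_scope.

Definition series (S : finType) := seq S -> rat.

Definition szero (S : finType) : series S := fun _ => 0.
Definition sscale (S : finType) (c : rat) (f : series S) : series S := fun w => c * f w.
Definition sadd (S : finType) (f g : series S) : series S := fun w => f w + g w.
Definition sdelta (S : finType) (a : S) (f : series S) : series S := fun w => f (a :: w).

Inductive term (X : Type) : Type :=
  | TVar of X
  | TZero
  | TScale of rat & term X
  | TAdd of term X & term X
  | TMul of term X & term X.

Inductive pvar : Type := VX | VDX | VY | VDY.

Definition product_rule := term pvar.

Fixpoint eval (S : finType) (X : Type) (mul : series S -> series S -> series S)
    (rho : X -> series S) (t : term X) : series S :=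
  match t with
  | TVar x => rho x
  | TZero => @szero S
  | TScale c u => sscale c (eval mul rho u)
  | TAdd u v => sadd (eval mul rho u) (eval mul rho v)
  | TMul u v => mul (eval mul rho u) (eval mul rho v)
  end.

Definition prho (S : finType) (a : S) (f g : series S) : pvar -> series S :=
  fun v => match v with
           | VX => f | VDX => sdelta a f | VY => g | VDY => sdelta a g end.

(* Approximants of the P-product: `mulN n f g` is correct on words of
   length < n (it is defined by recursion on word length, following
   (f*g)_eps = f_eps g_eps and delta_a (f*g) = [[P]]_[x:=f, xdot:=delta_a f,
   y:=g, ydot:=delta_a g]). *)
Fixpoint mulN (S : finType) (P : product_rule) (n : nat) (f g : series S)
    : series S :=
  match n with
  | 0 => fun _ => f [::] * g [::]
  | n'.+1 => fun w => match w with
                      | [::] => f [::] * g [::]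
                      | a :: w' => eval (mulN P n') (prho a f g) P w'
                      end
  end.

Definition pmul (S : finType) (P : product_rule) (f g : series S) : series S :=
  fun w => mulN P (size w).+1 f g w.

Definition psem (S : finType) (P : product_rule) (X : Type)
    (rho : X -> series S) (t : term X) : series S := eval (pmul P) rho t.

Inductive inA (S : finType) (P : product_rule) (k : nat) (gs : 'I_k -> series S)
    : series S -> Prop :=
  | inA_zero : inA P gs (@szero S)
  | inA_gen : forall i, inA P gs (gs i)
  | inA_scale : forall c f, inA P gs f -> inA P gs (sscale c f)
  | inA_add : forall f h, inA P gs f -> inA P gs h -> inA P gs (sadd f h)
  | inA_mul : forall f h, inA P gs f -> inA P gs h -> inA P gs (pmul P f h).

Definition Pfinite (S : finType) (P : product_rule) (f : series S) : Prop :=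
  exists (k : nat) (gs : 'I_k.+1 -> series S),
    gs ord0 = f /\ forall (i : 'I_k.+1) (a : S), inA P gs (sdelta a (gs i)).

(* Main.v *)
Require Import Defs.
From mathcomp Require Import all_boot all_algebra.
From Stdlib Require List.
Import List (incl, in_or_app, in_app_or, in_map, in_map_iff).

Set Implicit Arguments.
Section Aux.
Variables (S : finType) (P : product_rule).

Definition inL (l : list (series S)) (f : series S) :=
  inA P (fun j : 'I_(size l) => nth (@szero S) l j) f.

Lemma nth_In' (l : list (series S)) d (i : nat) : (i < size l)%N -> List.In (nth d l i) l.
Proof.
elim: l i => [|x l IH] [|i] //= H; [left | right; apply: IH]; done.
Qed.

Lemma In_nth' (l : list (series S)) d x : List.In x l ->
  exists i, (i < size l)%N /\ nth d l i = x.
Proof.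
elim: l => [|y l IH] //= [->|H]; first by exists 0%N.
have [i [Hi E]] := IH H. by exists i.+1.
Qed.

Lemma In_inL l x : List.In x l -> inL l x.
Proof.
move=> H; have [i [Hi E]] := @In_nth' l (@szero S) x H.
rewrite -E. exact: (@inA_gen _ _ _ _ (Ordinal Hi)).
Qed.

Lemma inA_mono k (gs : 'I_k -> series S) l f :
  (forall i, List.In (gs i) l) -> inA P gs f -> inL l f.
Proof.
move=> Hg; elim => [|i|c h _ IH|h1 h2 _ IH1 _ IH2|h1 h2 _ IH1 _ IH2].
- exact: inA_zero.
- exact: In_inL.
- exact: inA_scale.
- exact: inA_add.
- exact: inA_mul.
Qed.

Lemma inL_incl l1 l2 f : incl l1 l2 -> inL l1 f -> inL l2 f.
Proof.
move=> Hi; apply: inA_mono => i; apply: Hi; apply: nth_In'; exact: ltn_ord.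
Qed.

Definition Good l := forall x, List.In x l -> forall b, inL l (sdelta b x).

Lemma In_enum (T : finType) (i : T) : List.In i (enum T).
Proof.
have : i \in enum T by rewrite mem_enum.
elim: (enum T) => [|y s IH]; first by rewrite in_nil.
rewrite in_cons => /orP [/eqP ->|H]; [by left | right; exact: IH H].
Qed.

Lemma Pfinite_good f : Pfinite P f -> exists l, List.In f l /\ Good l.
Proof.
move=> [k [gs [H0 H]]].
have Hin : forall i, List.In (gs i) (map gs (enum 'I_k.+1)).
  by move=> i; apply: in_map; apply: In_enum.
exists (map gs (enum 'I_k.+1)); split; first by rewrite -H0.
move=> x /in_map_iff [i [<- _]] b. exact: inA_mono (H i b).
Qed.

Lemma build (fs : S -> series S) (L : list S) : (forall a, Pfinite P (fs a)) ->
  exists rest, (forall a, List.In a L -> List.In (fs a) rest) /\ Good rest.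
Proof.
move=> Hf; elim: L => [|a L [r1 [H1 G1]]].
- exists nil; split => // x [].
- have [l [Hl Gl]] := Pfinite_good (Hf a).
  exists (r1 ++ l); split.
  + move=> b /= [<-|Hb]; apply: in_or_app; [right|left; apply: H1]; done.
  + move=> x Hx0 b; case: (in_app_or _ _ _ Hx0) => Hx.
    * apply: (inL_incl _ (G1 x Hx b)) => y Hy; apply: in_or_app; left; done.
    * apply: (inL_incl _ (Gl x Hx b)) => y Hy; apply: in_or_app; right; done.
Qed.
End Aux.

Theorem mainTheorem19 (S : finType) (P : product_rule) (fs : S -> series S)
    (g : series S) :
  (forall a : S, Pfinite P (fs a)) ->
  (forall a : S, sdelta a g = fs a) ->
  Pfinite P g.
Proof.
move=> Hf Hd.
have [rest [Hr Gr]] := @build S P fs (enum S) Hf.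
have Hinc : incl rest (g :: rest) by move=> y Hy; right.
exists (size rest), (fun j : 'I_(size rest).+1 => nth (@szero S) (g :: rest) j).
split; first by [].
case=> [[|i] Hi] b /=.
- rewrite Hd; apply: (@In_inL S P (g :: rest)); right; apply: Hr; apply: In_enum.
- apply: (@inL_incl S P rest (g :: rest) _ Hinc); apply: Gr; apply: nth_In'; done.
Qed.
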